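(* Let $G$ and $H$ be threshold graphs. Then $G$ is (isomorphic to) an induced subgraph of $H$ if and only if $\mathrm{seq}(G)$ is a subsequence (not necessarily of consecutive digits) of $\mathrm{seq}(H)$.
   Context: A threshold graph on $n\ge 1$ vertices is built from a single base vertex $v_0$ by successively adding vertices $v_1,\dots,v_{n-1}$, where each new vertex $v_i$ is added either as an isolated vertex (adjacent to none of $v_0,\dots,v_{i-1}$) or as a dominating vertex (adjacent to all of $v_0,\dots,v_{i-1}$). The creation sequence $\mathrm{seq}(G)=s_1s_2\cdots s_{n-1}$ is the binary string with $s_i=1$ if $v_i$ was added as a dominating vertex and $s_i=0$ if added as an isolated vertex. Every unlabeled threshold graph on $n$ vertices arises from exactly one binary string of length $n-1$ in this way. *)

(* Defs.v *)
From mathcomp Require Import all_boot.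
Set Implicit Arguments. Unset Strict Implicit. Unset Printing Implicit Defensive.

Definition simple_graph (T : finType) (e : rel T) : Prop :=
  symmetric e /\ irreflexive e.

(* The threshold graph built from a creation sequence s = s_1 ... s_{n-1}:
   vertices v_0, ..., v_{n-1} are 'I_(size s).+1; for i < j, v_i ~ v_j iff
   v_j was added as a dominating vertex, i.e. s_j = true, where
   s_j = nth false s (j - 1). *)
Definition thr_adj (s : seq bool) : rel 'I_(size s).+1 :=
  fun i j => (i != j) && nth false s (maxn i j).-1.

Definition creation_seq_of (T : finType) (e : rel T) (s : seq bool) : Prop :=
  exists phi : 'I_(size s).+1 -> T,
    bijective phi /\ forall i j, e (phi i) (phi j) = @thr_adj s i j.

Definition induced_subgraph_iso (T U : finType) (e : rel T) (f : rel U) : Prop :=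
  exists phi : T -> U,
    injective phi /\ forall x y, f (phi x) (phi y) = e x y.

(* Main.v *)
Require Import Defs.
From mathcomp Require Import all_boot.
From mathcomp Require Import zify.

Definition nadj (s : seq bool) (i j : nat) : bool :=
  (i != j) && nth false s (maxn i j).-1.

Lemma nadjC s i j : nadj s i j = nadj s j i.
Proof. by rewrite /nadj eq_sym maxnC. Qed.

Lemma nadj_rcons t y i j : i <= size t -> j <= size t ->
  nadj (rcons t y) i j = nadj t i j.
Proof.
move=> Hi Hj; rewrite /nadj; case: eqP => //= Hij.
rewrite nth_rcons; have -> : (maxn i j).-1 < size t by lia. by [].
Qed.

Lemma nadj_last s x i : i < (size s).+1 ->
  nadj (rcons s x) i (size s).+1 = x.
Proof.
move=> Hi; rewrite /nadj.
have -> : (i != (size s).+1) = true by apply/eqP; lia.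
have -> : maxn i (size s).+1 = (size s).+1 by lia.
by rewrite /= nth_rcons ltnn eqxx.
Qed.

Lemma sub_emb s t : subseq s t -> exists g : nat -> nat,
  [/\ g 0 = 0, (forall i j, i < j -> j <= size s -> g i < g j),
      (forall i, i <= size s -> g i <= size t) &
      (forall i, 0 < i -> i <= size s -> nth false t (g i).-1 = nth false s i.-1)].
Proof.
elim: t s => [|y t IH] s.
  rewrite subseq0 => /eqP ->; exists id; split => //= i j; lia.
case: s => [|x s'].
  by move=> _; exists (fun _ => 0); split => //= i j; lia.
rewrite /=; case: eqP => [<-|Hxy] Hs.
  have [g [g0 gm gb gn]] := IH _ Hs.
  exists (fun i => if i is k.+1 then (g k).+1 else 0); split => //.
  - move=> [|i] [|j] //= Hij /= Hj; rewrite ltnS //; apply: gm; [exact: Hij | exact: Hj].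
  - by move=> [|i] //= Hi; rewrite ltnS gb.
  move=> [|i] //= _ Hi; case: i Hi => [|i] Hi /=; first by rewrite g0.
  have : 0 < g i.+1 by rewrite -g0 gm.
  case E: (g i.+1) => [|k] //= _.
  by have := gn i.+1 isT Hi; rewrite E.
have [g [g0 gm gb gn]] := IH _ Hs.
exists (fun i => if i is 0 then 0 else (g i).+1); split => //.
- move=> [|i] [|j] //= Hij /= Hj; rewrite ltnS //; apply: gm; [exact: Hij | exact: Hj].
- by move=> [|i] //= Hi; rewrite ltnS gb.
move=> [|i] //= _ Hi.
have : 0 < g i.+1 by rewrite -g0 gm.
case E: (g i.+1) => [|k] //= _.
by rewrite -(gn i.+1) // E.
Qed.

Lemma sub_emb_adj s t g : g 0 = 0 -> (forall i j, i < j -> j <= size s -> g i < g j) ->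
      (forall i, 0 < i -> i <= size s -> nth false t (g i).-1 = nth false s i.-1) ->
  forall i j, i <= size s -> j <= size s -> nadj t (g i) (g j) = nadj s i j.
Proof.
move=> g0 gm gn.
suff H : forall i j, i < j -> j <= size s -> nadj t (g i) (g j) = nadj s i j.
  move=> i j Hi Hj; case: (ltngtP i j) => Hij.
  - exact: H.
  - by rewrite nadjC H // nadjC.
  by rewrite Hij /nadj !eqxx.
move=> i j Hij Hj; have := gm _ _ Hij Hj => Hg.
rewrite /nadj; have -> : (g i != g j) = true by apply/eqP; lia.
have -> : (i != j) = true by apply/eqP; lia.
have -> : maxn (g i) (g j) = g j by lia.
have -> : maxn i j = j by lia.
by rewrite /= gn //; lia.
Qed.

Lemma emb_sub t : forall s (g : nat -> nat),
  (forall i, i <= size s -> g i <= size t) ->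
  (forall i j, i <= size s -> j <= size s -> g i = g j -> i = j) ->
  (forall i j, i <= size s -> j <= size s -> nadj t (g i) (g j) = nadj s i j) ->
  subseq s t.
Proof.
elim/last_ind: t => [|t' y IH] s g gb gi ga.
  case: s gb gi ga => [|x s'] // gb gi ga.
  have h0 := gb 0 isT; have h1 := gb 1 isT.
  have : g 0 = g 1 by move: h0 h1; rewrite !leqn0 => /eqP -> /eqP ->.
  by move/gi => /(_ isT isT).
case/lastP: s gb gi ga => [|s' x] gb gi ga; first exact: sub0seq.
rewrite size_rcons in gb gi ga.
have [/hasP [a] | Hno] := boolP (has (fun a => g a == (size t').+1) (iota 0 (size s').+2)).
  rewrite mem_iota add0n => /andP [_ Ha] /eqP Hga.
  have Hadj : forall b, b <= (size s').+1 -> b != a -> nadj (rcons s' x) a b = y.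
    move=> b Hb Hba; rewrite -ga // Hga.
    have Hgb := gb b Hb.
    have Hne : g b != (size t').+1.
      by apply/eqP => E; move/eqP: Hba; apply; apply: gi => //; rewrite E Hga.
    rewrite nadjC nadj_last //.
    by rewrite ltn_neqAle Hne -(size_rcons t' y).
  have Hxy : x = y.
    have [Ea|Ea] := eqVneq a (size s').+1.
      have H0 : (0 != a) by rewrite Ea.
      by have := Hadj 0 (leq0n _) H0; rewrite Ea nadjC nadj_last.
    have H0 : ((size s').+1 != a) by rewrite eq_sym.
    have := Hadj _ (leqnn _) H0; rewrite nadj_last //.
    by rewrite ltn_neqAle Ea -ltnS.
  subst y.
  pose sg i := if i == a then (size s').+1 else i.
  have Hsg : forall i, i <= size s' -> sg i <= (size s').+1 /\ sg i != a.
    move=> i Hi; rewrite /sg; case: eqP => [Eia|Nia]; split => //.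
      by apply/eqP => E; move: Hi; rewrite Eia -E ltnn.
    by apply: leqW.
    exact/eqP.
  rewrite -!cats1; apply: cat_subseq => //.
  apply: (IH _ (fun i => g (sg i))).
  - move=> i Hi; have [H1 H2] := Hsg i Hi.
    have : g (sg i) != (size t').+1.
      by apply/eqP => E; move/eqP: H2; apply; apply: gi => //; rewrite E Hga.
    have := gb _ H1; rewrite size_rcons leq_eqVlt => /orP [/eqP -> | //].
    by rewrite eqxx.
  - move=> i j Hi Hj E; have [H1 H2] := Hsg i Hi; have [H3 H4] := Hsg j Hj.
    have := gi _ _ H1 H3 E; rewrite /sg.
    case: eqP => Eia; case: eqP => Eja; try congruence;
      move=> E'; subst; by rewrite ltnn in Hi Hj.
  - move=> i j Hi Hj; have [H1 H2] := Hsg i Hi; have [H3 H4] := Hsg j Hj.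
    have Hgi : g (sg i) <= size t'.
      have : g (sg i) != (size t').+1.
        by apply/eqP => E; move/eqP: H2; apply; apply: gi => //; rewrite E Hga.
      have := gb _ H1; rewrite size_rcons leq_eqVlt => /orP [/eqP -> | //].
      by rewrite eqxx.
    have Hgj : g (sg j) <= size t'.
      have : g (sg j) != (size t').+1.
        by apply/eqP => E; move/eqP: H4; apply; apply: gi => //; rewrite E Hga.
      have := gb _ H3; rewrite size_rcons leq_eqVlt => /orP [/eqP -> | //].
      by rewrite eqxx.
    rewrite -(@nadj_rcons _ x _ _ Hgi Hgj) ga // -(@nadj_rcons _ x _ _ Hi Hj).
    rewrite /sg; case: eqP => Eia; case: eqP => Eja.
    + by rewrite Eia Eja /nadj !eqxx.
    + rewrite nadjC nadj_last // Eia Hadj //; last exact/eqP.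
      by apply: leqW.
    + rewrite nadj_last // Eja nadjC Hadj //; last exact/eqP.
      by apply: leqW.
    + by [].
have Hb : forall i, i <= (size s').+1 -> g i <= size t'.
  move=> i Hi; have := gb _ Hi; rewrite size_rcons leq_eqVlt => /orP [/eqP E | //].
  move/hasPn: Hno => /(_ i); rewrite mem_iota add0n ltnS Hi E eqxx => /(_ isT).
  by [].
apply: subseq_trans (subseq_rcons t' y).
apply: (IH _ g).
- by move=> i; rewrite size_rcons => /Hb.
- by rewrite size_rcons.
move=> i j; rewrite size_rcons => Hi Hj.
by rewrite -ga // nadj_rcons // Hb.
Qed.

Theorem mainTheorem1 (T : finType) (e : rel T) (U : finType) (f : rel U)
    (s t : seq bool) :
  simple_graph e -> simple_graph f ->
  creation_seq_of e s -> creation_seq_of f t ->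
  (induced_subgraph_iso e f <-> subseq s t).
Proof.
move=> _ _ [phi [[phiV phiK phiVK] Hphi]] [psi [[psiV psiK psiVK] Hpsi]].
split.
  move=> [h [hi Hh]].
  pose g n := val (psiV (h (phi (inord n)))).
  apply: (@emb_sub t s g).
  - by move=> i _; rewrite /g -ltnS ltn_ord.
  - move=> i j Hi Hj /val_inj E.
    have := congr1 psi E; rewrite !psiVK => /hi /(can_inj phiK) /(congr1 val).
    by rewrite /= !inordK ?ltnS.
  move=> i j Hi Hj.
  have -> : nadj t (g i) (g j) = thr_adj (psiV (h (phi (inord i)))) (psiV (h (phi (inord j)))) by [].
  rewrite -Hpsi !psiVK Hh Hphi /thr_adj /nadj.
  by rewrite -(inj_eq val_inj) /= !inordK ?ltnS.
move=> /sub_emb [g [g0 gm gb gn]].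
have ga := @sub_emb_adj s t g g0 gm gn.
pose k (i : 'I_(size s).+1) : 'I_(size t).+1 := inord (g i).
exists (fun x => psi (k (phiV x))); split.
  have Hk : forall i : 'I_(size s).+1, g i < (size t).+1.
    by move=> i; rewrite ltnS gb // -ltnS.
  move=> x y /(can_inj psiK) E0; have := congr1 val E0.
  rewrite /k /= !inordK // => E.
  have [Hxy|Hxy] := eqVneq (phiV x) (phiV y); first by rewrite -(phiVK x) Hxy phiVK.
  exfalso; move: E.
  have Hx : (phiV x : nat) <= size s by rewrite -ltnS.
  have Hy : (phiV y : nat) <= size s by rewrite -ltnS.
  have : (phiV x : nat) != phiV y by [].
  case: (ltngtP (phiV x) (phiV y)) => // H _.
  - by move=> E; have := gm _ _ H Hy; rewrite E ltnn.
  - by move=> E; have := gm _ _ H Hx; rewrite E ltnn.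
move=> x y; rewrite Hpsi -{2}(phiVK x) -{2}(phiVK y) Hphi.
have Ek : forall i, nat_of_ord (k i) = g i by move=> i; rewrite /k inordK // ltnS gb // -ltnS.
have Ekv : forall i, val (k i) = g i by exact: Ek.
rewrite /thr_adj.
have -> : (k (phiV x) != k (phiV y)) = (g (phiV x) != g (phiV y)).
  by rewrite -(inj_eq val_inj) !Ekv.
rewrite !Ek.
have -> : (phiV x != phiV y) = ((phiV x : nat) != phiV y) by [].
have Hx : (phiV x : nat) <= size s by rewrite -ltnS.
have Hy : (phiV y : nat) <= size s by rewrite -ltnS.
exact: (ga _ _ Hx Hy).
Qed.
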